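(* Let $r\le n$, let $\beta:[r]\to[2n]$ be injective, and let $A\in\mathrm{Sp}_{2n}$ satisfy $Ae_{2n,\beta(i)}=e_{2n,i}$ and $e_{2n,i}^{\top}A=e_{2n,\beta(i)}^{\top}$ for all $i\in[r]$. Then $\beta$ is qubit-injective, and for all $i\in[r]$: $Ae_{2n,2n+1-\beta(i)}=e_{2n,2n+1-i}$ and $e_{2n,2n+1-i}^{\top}A=e_{2n,2n+1-\beta(i)}^{\top}$.
   Context: $\mathbb{F}$ is the field with two elements, $[N]=\{1,\dots,N\}$, $e_{2n,i}$ standard basis column vectors of $\mathbb{F}^{2n}$. $R_{2n}=\sum_{i=1}^{2n}e_{2n,i}e_{2n,2n+1-i}^{\top}$; $\mathrm{Sp}_{2n}=\{C\in\mathbb{F}^{2n\times2n}:C^{\top}R_{2n}C=R_{2n}\}$. $Q_n(i)=\min(i,2n+1-i)$; $\beta$ is qubit-injective if $Q_n\circ\beta$ is injective. *)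

(* Defs.v *)
From mathcomp Require Import all_boot all_algebra.
Set Implicit Arguments. Unset Strict Implicit. Unset Printing Implicit Defensive.
Import GRing.Theory.
Local Open Scope ring_scope.

(* Indices [N] = {1..N} are represented 0-based by 'I_N: the paper's index k
   corresponds to the ordinal k-1.  Then 2n+1-k corresponds to rev_ord. *)

Notation F2 := 'F_2.

Definition ebasis (N : nat) (i : 'I_N) : 'cV[F2]_N := delta_mx i 0.

Definition Rmx (n : nat) : 'M[F2]_(n + n) :=
  \sum_(i < n + n) ebasis i *m (ebasis (rev_ord i))^T.

Definition symplectic (n : nat) (C : 'M[F2]_(n + n)) : Prop :=
  C^T *m Rmx n *m C = Rmx n.

(* Q_n(i) = min(i, 2n+1-i) (1-based); for the ordinal k (paper index k+1)
   this is min(k+1, 2n-k). *)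
Definition Qn (n : nat) (k : 'I_(n + n)) : nat := minn k.+1 (n + n - k).

Definition qubit_injective (r n : nat) (beta : 'I_r -> 'I_(n + n)) : Prop :=
  injective (fun i => Qn (beta i)).

Definition emb (r n : nat) (h : (r <= n)%N) (i : 'I_r) : 'I_(n + n) :=
  widen_ord (leq_trans h (leq_addr n n)) i.

(* Main.v *)
Require Import Defs.
From mathcomp Require Import all_boot all_algebra.
From mathcomp Require Import zify.
Local Open Scope ring_scope.
Import GRing.Theory.

Lemma Rmx_E n : Rmx n = \matrix_(a, b) ((b == rev_ord a)%:R : F2).
Proof.
apply/matrixP => a b; rewrite /Rmx summxE !mxE.
rewrite (bigD1 a) //= big1.
  rewrite addr0 /ebasis trmx_delta mul_delta_mx mxE eqxx /=.
  by case: (b == rev_ord a).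
move=> i ia; rewrite /ebasis trmx_delta mul_delta_mx mxE.
by rewrite eq_sym (negbTE ia).
Qed.

Lemma RmxM n p (M : 'M[F2]_(n + n, p)) :
  Rmx n *m M = \matrix_(a, b) M (rev_ord a) b.
Proof.
apply/matrixP => a b; rewrite Rmx_E !mxE.
rewrite (bigD1 (rev_ord a)) //= big1.
  by rewrite addr0 mxE eqxx mul1r.
move=> i ia; by rewrite mxE (negbTE ia) mul0r.
Qed.

Lemma eq_rev N (a b : 'I_N) : (a == rev_ord b) = (b == rev_ord a).
Proof. by apply/eqP/eqP => ->; rewrite rev_ordK. Qed.

Lemma Rmx_e n (j : 'I_(n + n)) : Rmx n *m ebasis j = ebasis (rev_ord j).
Proof.
rewrite RmxM; apply/matrixP => a b; rewrite /ebasis !mxE.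
by rewrite eq_rev eq_sym.
Qed.

Lemma Rmx_tr n : (Rmx n)^T = Rmx n.
Proof.
apply/matrixP => a b; rewrite Rmx_E !mxE.
by rewrite eq_rev eq_sym.
Qed.

Lemma Rmx_sq n : Rmx n *m Rmx n = 1%:M.
Proof.
rewrite RmxM; apply/matrixP => a b; rewrite Rmx_E !mxE rev_ordK.
by rewrite eq_sym.
Qed.

Theorem lemma10 (r n : nat) (hrn : (r <= n)%N) (beta : 'I_r -> 'I_(n + n))
  (A : 'M[F2]_(n + n)) :
  injective beta ->
  symplectic A ->
  (forall i : 'I_r, A *m ebasis (beta i) = ebasis (emb hrn i)) ->
  (forall i : 'I_r, (ebasis (emb hrn i))^T *m A = (ebasis (beta i))^T) ->
  qubit_injective beta /\
  (forall i : 'I_r,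
     A *m ebasis (rev_ord (beta i)) = ebasis (rev_ord (emb hrn i)) /\
     (ebasis (rev_ord (emb hrn i)))^T *m A = (ebasis (rev_ord (beta i)))^T).
Proof.
move=> binj hS h1 h2.
have h2' i : A^T *m ebasis (emb hrn i) = ebasis (beta i).
  by rewrite -[A^T *m _]trmxK trmx_mul trmxK h2 trmxK.
have ARAt : A *m Rmx n *m A^T = Rmx n.
  have : (Rmx n *m A^T *m Rmx n) *m A = 1%:M.
    by rewrite -!mulmxA (mulmxA A^T) hS Rmx_sq.
  move/mulmx1C => H.
  rewrite -[LHS]mulmx1 -Rmx_sq mulmxA.
  have -> : A *m Rmx n *m A^T *m Rmx n = A *m (Rmx n *m A^T *m Rmx n)
    by rewrite !mulmxA.
  by rewrite H mul1mx.
have key i : A *m ebasis (rev_ord (beta i)) = ebasis (rev_ord (emb hrn i)).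
  rewrite -!Rmx_e -h2'.
  by rewrite -{2}ARAt !mulmxA.
split; last first.
  move=> i; split; first exact: key.
  rewrite -Rmx_e -h1 -Rmx_e !trmx_mul Rmx_tr -!mulmxA (mulmxA A^T).
  by rewrite hS.
move=> i j /=; rewrite /Qn => hq.
have hi := ltn_ord (beta i); have hj := ltn_ord (beta j).
have [bij|bij] : (nat_of_ord (beta i) = beta j \/
    nat_of_ord (beta j) = (n + n).-1 - beta i)%N by lia.
  by apply: binj; apply: val_inj.
have e : rev_ord (beta i) = beta j by apply: val_inj; rewrite /= bij; lia.
have := key i; rewrite e h1 /ebasis => /matrixP /(_ (emb hrn j) 0).
rewrite !mxE eqxx /=; case: eqP => [he|] _; last by [].
have := congr1 val he => /=. have := ltn_ord i; have := ltn_ord j. lia.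
Qed.
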